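(* Let $\Gamma$ be a distance-regular graph with diameter $D\ge3$ and $a_1\ne0$. Let $\sigma_0,\dots,\sigma_D$ be a nontrivial pseudo cosine sequence which is tight, with auxiliary parameter $\varepsilon$, and write $\sigma=\sigma_1$. Then for $1\le i\le D-1$ the quantities $(\sigma_{i+1}-\sigma_i)(\sigma_{i-1}-\sigma_i)$ and $(\sigma^2-\sigma_2)(1-\varepsilon\sigma)$ are nonzero and $$a_i=g\,\frac{(\sigma_{i+1}-\sigma\sigma_i)(\sigma_{i-1}-\sigma\sigma_i)}{(\sigma_{i+1}-\sigma_i)(\sigma_{i-1}-\sigma_i)},\qquad\text{where}\quad g=\frac{(\varepsilon-1)(1-\sigma_2)}{(\sigma^2-\sigma_2)(1-\varepsilon\sigma)}.$$
   Context: $\Gamma$ is a finite connected undirected graph without loops or multiple edges, distance-regular with diameter $D$, intersection numbers $a_i,b_i,c_i$ ($c_0=0$, $b_D=0$), valency $k$, $c_i+a_i+b_i=k$. For $\theta\in\mathbb{R}$ the pseudo cosine sequence for $\theta$ is the sequence of reals $\sigma_0,\dots,\sigma_D$ with $\sigma_0=1$ and $c_i\sigma_{i-1}+a_i\sigma_i+b_i\sigma_{i+1}=\theta\sigma_i$ for $0\le i\le D-1$; nontrivial means $\sigma_1\ne1$. Pseudo cosine sequences $\sigma_i$, $\rho_i$ form a tight pair if $(\sigma_i\rho_i)_{i=0}^D$ is a pseudo cosine sequence. For a tight pair of nontrivial pseudo cosine sequences, an auxiliary parameter is a real $\varepsilon$ with $\sigma_i\rho_i-\sigma_{i-1}\rho_{i-1}=\varepsilon(\sigma_{i-1}\rho_i-\sigma_i\rho_{i-1})$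 for $1\le i\le D$. When $a_1\ne0$, a nontrivial pseudo cosine sequence is tight if some nontrivial pseudo cosine sequence forms a tight pair with it; its auxiliary parameter is the (uniquely determined) auxiliary parameter of that pair. *)

(* Defs.v *)
From mathcomp Require Import all_boot all_order all_algebra.
Set Implicit Arguments. Unset Strict Implicit. Unset Printing Implicit Defensive.
Import Order.TTheory GRing.Theory Num.Theory.

Section Graph.
Variables (T : finType) (e : rel T).

Definition simple_graph := symmetric e /\ irreflexive e.

Fixpoint nball (x : T) (n : nat) : {set T} :=
  match n with
  | 0 => [set x]
  | n'.+1 => nball x n' :|: [set z | [exists y in nball x n', e y z]]
  end.

Definition connected_graph := forall x y : T, exists n, y \in nball x n.

Definition dist (x y : T) : nat :=
  find (fun n => y \in nball x n) (iota 0 #|T|).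

Definition diameter : nat := (\max_(x : T) \max_(y : T) dist x y)%N.

Definition distance_regular (D : nat) (a b c : nat -> nat) :=
  [/\ simple_graph, connected_graph, diameter = D &
   forall x y : T,
     [/\ #|[set z | e y z & (dist x z).+1 == dist x y]| = c (dist x y),
         #|[set z | e y z & dist x z == dist x y]| = a (dist x y) &
         #|[set z | e y z & dist x z == (dist x y).+1]| = b (dist x y)]].
End Graph.

Section Cosine.
Variables (R : realFieldType) (D : nat) (a b c : nat -> nat).
Local Open Scope ring_scope.

(* pseudo cosine sequence for theta: sigma_0 = 1 and
   c_i sigma_{i-1} + a_i sigma_i + b_i sigma_{i+1} = theta sigma_i, 0 <= i <= D-1
   (for i = 0, c_0 = 0, so the value used for sigma_{-1} is irrelevant). *)
Definition pseudo_cosine_for (theta : R) (s : nat -> R) :=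
  s 0%N = 1 /\
  forall i : nat, (i < D)%N ->
    (c i)%:R * s i.-1 + (a i)%:R * s i + (b i)%:R * s i.+1 = theta * s i.

Definition pseudo_cosine (s : nat -> R) := exists theta, pseudo_cosine_for theta s.

Definition nontrivial (s : nat -> R) := s 1%N != 1.

Definition tight_pair (s r : nat -> R) :=
  [/\ pseudo_cosine s, pseudo_cosine r & pseudo_cosine (fun i => s i * r i)].

Definition aux_param (s r : nat -> R) (eps : R) :=
  forall i : nat, (1 <= i <= D)%N ->
    s i * r i - s i.-1 * r i.-1 = eps * (s i.-1 * r i - s i * r i.-1).

Definition tight_with_aux (s : nat -> R) (eps : R) :=
  nontrivial s /\ pseudo_cosine s /\
  exists r : nat -> R, [/\ pseudo_cosine r, nontrivial r, tight_pair s r & aux_param s r eps].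
End Cosine.

(* Main.v *)
Require Import Defs.
From mathcomp Require Import all_boot all_order all_algebra.
From mathcomp Require Import zify ring lra.
Import Order.TTheory GRing.Theory Num.Theory.
Set Implicit Arguments. Unset Strict Implicit.
Section G.
Variables (T : finType) (e : rel T).
Hypothesis esym : symmetric e.
Hypothesis eirr : irreflexive e.

Local Notation N := #|T|.
Local Notation dist := (dist e).
Local Notation nball := (nball e).

Lemma dist_le x y : (dist x y <= N)%N.
Proof. by rewrite /Defs.dist (leq_trans (find_size _ _)) // size_iota. Qed.

Lemma dist_mem x y : (dist x y < N)%N -> y \in nball x (dist x y).
Proof.
move=> h.
have hh : has (fun n => y \in nball x n) (iota 0 N).
  by rewrite has_find size_iota.
have := nth_find 0 hh. by rewrite nth_iota // -(size_iota 0 N) -has_find.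
Qed.

Lemma dist_min x y n : (n < N)%N -> y \in nball x n -> (dist x y <= n)%N.
Proof.
move=> hn hy; rewrite leqNgt; apply/negP => h.
have := before_find 0 h. by rewrite nth_iota // hy.
Qed.

Lemma nball_mono x n y : y \in nball x n -> y \in nball x n.+1.
Proof. by move=> h /=; rewrite in_setU h. Qed.

Lemma nball_step x n y z : y \in nball x n -> e y z -> z \in nball x n.+1.
Proof. move=> h hyz /=; rewrite in_setU inE; apply/orP; right; apply/existsP; exists y; by rewrite h. Qed.

Lemma nball_inv x n z : z \in nball x n.+1 -> z \in nball x n \/ exists2 y, y \in nball x n & e y z.
Proof.
rewrite /= in_setU inE => /orP[h|/existsP[y /andP[h1 h2]]]; [by left| right; by exists y].
Qed.

Lemma dist_lip x y z : e y z -> (dist x z <= (dist x y).+1)%N.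
Proof.
move=> hyz; case: (ltnP (dist x y) N) => h.
  have hz := nball_step (dist_mem h) hyz.
  case: (ltnP (dist x y).+1 N) => h2; first exact: dist_min h2 hz.
  exact: leq_trans (dist_le _ _) h2.
apply: leq_trans (dist_le _ _) _; exact: leqW.
Qed.

Lemma card_pos (x : T) : (0 < N)%N.
Proof. by apply/card_gt0P; exists x. Qed.

Lemma dist_xx x : dist x x = 0%N.
Proof. apply/eqP; rewrite -leqn0; apply: dist_min (card_pos x) _; by rewrite /= inE. Qed.

Lemma dist0 x y : dist x y = 0%N -> y = x.
Proof.
move=> h; have := dist_mem (x:=x) (y:=y); rewrite h /= inE => H.
by apply/eqP; apply: H; apply: card_pos x.
Qed.

Lemma dist_adj x y : e x y -> dist x y = 1%N.
Proof.
move=> hxy; apply/eqP; rewrite eqn_leq; have := dist_lip x hxy; rewrite dist_xx => ->.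
rewrite lt0n; apply/negP => /eqP /dist0 hyx; by rewrite hyx eirr in hxy.
Qed.

Lemma dist1E x y : dist x y = 1%N -> e x y.
Proof.
move=> h.
have hN : (1 < N)%N.
  apply/card_gt1P; exists x, y; split => //; apply/negP => /eqP hxy.
  by rewrite hxy dist_xx in h.
have := dist_mem (x:=x) (y:=y); rewrite h => /(_ hN).
case/nball_inv => [/=|[t]]; rewrite inE.
  move/eqP => hyx; by rewrite hyx dist_xx in h.
by move/eqP ->.
Qed.

Lemma nball_front n x x' y : e x x' -> y \in nball x' n -> y \in nball x n.+1.
Proof.
elim: n y => [|n IH] y hxx'.
  rewrite /= inE => /eqP ->; apply: (@nball_step x 0 x x' _ hxx'); by rewrite /= inE.
case/nball_inv => [h|[z hz hzy]].
  exact: nball_mono (IH _ hxx' h).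
exact: nball_step (IH _ hxx' hz) hzy.
Qed.

Lemma nball_sym n x y : y \in nball x n -> x \in nball y n.
Proof.
elim: n x y => [|n IH] x y.
  by rewrite /= !inE => /eqP ->.
case/nball_inv => [h|[z hz hzy]].
  exact: nball_mono (IH _ _ h).
apply: (nball_front (x' := z)); first by rewrite esym.
exact: IH.
Qed.

Lemma dist_sym x y : dist x y = dist y x.
Proof.
rewrite /Defs.dist; apply: eq_find => n /=.
by apply/idP/idP => /nball_sym.
Qed.

Lemma edge_levels x n w : w \in nball x n -> forall j, (j < dist x w)%N ->
  exists v v', [/\ e v v', dist x v = j & dist x v' = j.+1].
Proof.
elim: n w => [|n IH] w.
  by rewrite /= inE => /eqP ->; rewrite dist_xx.
case/nball_inv => [h|[y hy hyw]]; first exact: IH.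
move=> j hj.
case: (ltnP j (dist x y)) => hjy; first exact: IH hy j hjy.
have h1 := dist_lip x hyw.
have hj' : j = dist x y by apply/eqP; rewrite eqn_leq hjy -ltnS (leq_trans hj h1).
exists y, w; split => //; apply/eqP; rewrite eqn_leq hj hj' h1 //.
Qed.

Lemma card_split x y :
  #|[set z | e y z]| =
  (#|[set z | e y z & (dist x z).+1 == dist x y]| +
   #|[set z | e y z & dist x z == dist x y]| +
   #|[set z | e y z & dist x z == (dist x y).+1]|)%N.
Proof.
rewrite -!sum1_card !(big_mkcond (fun z => z \in _)) -!big_split /=.
apply: eq_bigr => z _; rewrite !inE.
case hyz: (e y z) => //=.
have h1 := dist_lip x hyz.
have h2 : (dist x y <= (dist x z).+1)%N by apply: dist_lip; rewrite esym.
have E1 : ((dist x z).+1 == dist x y) = (dist x z < dist x y)%N.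
  apply/eqP/idP => H; [lia|]; apply/eqP; rewrite eqn_leq H h2 //.
have E3 : (dist x z == (dist x y).+1) = (dist x y < dist x z)%N.
  apply/eqP/idP => H; [lia|]; apply/eqP; rewrite eqn_leq H h1 //.
rewrite E1 E3.
case: (ltngtP (dist x z) (dist x y)) => h //.
Qed.

End G.

Lemma dr_facts (T : finType) (e : rel T) (D : nat) (a b c : nat -> nat) :
  distance_regular e D a b c -> (3 <= D)%N -> a 1%N <> 0%N ->
  (forall j, j <= D -> a j + b j + c j = b 0)%N /\ c 0%N = 0%N /\ a 0%N = 0%N /\ c 1%N = 1%N /\
     (forall j, 1 <= j <= D -> 0 < c j)%N /\ (forall j, j < D -> 0 < b j)%N /\
     (forall j, 1 <= j < D -> 0 < a j)%N.
Proof.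
move=> [[esym eirr] conn diam H] hD ha1.
have [x0 _ | hnone] := pickP (@predT T); last first.
  move: diam; rewrite /diameter big_pred0 // => hD0; by rewrite -hD0 in hD.
have hT : (0 < #|T|)%N by apply/card_gt0P; exists x0.
have [y0 hy0] := @bigop.eq_bigmax T (fun x => \max_y dist e x y) hT.
have [w0 hw0] := @bigop.eq_bigmax T (fun y => dist e y0 y) hT.
move: diam; rewrite /diameter hy0 hw0 => {x0 hy0 hw0} hdist.
set x0 := y0 in hdist *.
have [n hn] := conn x0 w0.
have lev : forall j, (j < D)%N -> exists v v', [/\ e v v', dist e x0 v = j & dist e x0 v' = j.+1].
  move=> j hj; apply: (edge_levels hn); by rewrite hdist.
have deg : forall y, b 0%N = #|[set z | e y z]|.
  move=> y; have [_ _ h] := H y y; rewrite dist_xx in h; rewrite -h; apply: eq_card => z; rewrite !inE.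
  case hyz: (e y z) => //=; by rewrite (dist_adj eirr hyz).
have sum3 : forall x y, (a (dist e x y) + b (dist e x y) + c (dist e x y) = b 0)%N.
  move=> x y; have [h1 h2 h3] := H x y; rewrite (deg y) (card_split esym x y) h1 h2 h3; lia.
have c0 : c 0%N = 0%N.
  have [h1 _ _] := H x0 x0; rewrite dist_xx in h1; rewrite -h1; apply/eqP; rewrite cards_eq0; apply/eqP/setP => z; by rewrite !inE andbF.
have a0 : a 0%N = 0%N.
  have [_ h1 _] := H x0 x0; rewrite dist_xx in h1; rewrite -h1; apply/eqP; rewrite cards_eq0; apply/eqP/setP => z; rewrite !inE.
  case hz: (e x0 z) => //=; by rewrite (dist_adj eirr hz).
have c1 : c 1%N = 1%N.
  have [v [v' [hvv' hv hv']]] := lev 0%N ltac:(lia).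
  have hvx := dist0 hv; subst v.
  have [h1 _ _] := H x0 v'; rewrite hv' in h1; rewrite -h1.
  have -> : [set z | e v' z & (dist e x0 z).+1 == 1%N] = [set x0].
    apply/setP => z; rewrite !inE; apply/andP/eqP => [[_ /eqP [] /dist0 //]|->]; by rewrite esym hvv' dist_xx.
  exact: cards1.
have cpos : forall j, (1 <= j <= D -> 0 < c j)%N.
  move=> j /andP[hj1 hj2]; have [v [v' [hvv' hv hv']]] := lev j.-1 ltac:(lia).
  have [h1 _ _] := H x0 v'; rewrite hv' (prednK hj1) in h1; rewrite -h1; apply/card_gt0P; exists v.
  by rewrite !inE esym hvv' hv (prednK hj1) eqxx.
have bpos : forall j, (j < D -> 0 < b j)%N.
  move=> j hj; have [v [v' [hvv' hv hv']]] := lev j hj.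
  have [_ _ h1] := H x0 v; rewrite hv in h1; rewrite -h1; apply/card_gt0P; exists v'.
  by rewrite !inE hvv' hv' eqxx.
have F1 : forall j, (j <= D -> a j + b j + c j = b 0)%N.
  move=> j hj; case: (ltnP j D) => hjD.
    have [v [v' [_ hv _]]] := lev j hjD; rewrite -hv; exact: sum3.
  have -> : j = dist e x0 w0 by rewrite hdist; apply/eqP; rewrite eqn_leq hj hjD.
  exact: sum3.
suff apos : forall j, (1 <= j < D -> 0 < a j)%N by do !split.
move=> j /andP[hj1 hjD].
have [y [z [hyz hy hz]]] := lev j hjD.
have [_ ha _] := H y z; rewrite (dist_adj eirr hyz) in ha.
have [w] : exists w, w \in [set t | e z t & dist e y t == 1%N].
  apply/card_gt0P; rewrite ha lt0n; exact/eqP.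
rewrite !inE => /andP[hzw /eqP /dist1E hyw].
have l1 := dist_lip x0 hyw.
have l2 : (dist e x0 z <= (dist e x0 w).+1)%N by apply: dist_lip; rewrite esym.
case: (ltnP j (dist e x0 w)) => hw; last first.
  have hwj : dist e x0 w = j by lia.
  have [_ h2 _] := H x0 y; rewrite hy in h2; rewrite -h2; apply/card_gt0P; exists w.
  by rewrite !inE hyw hwj eqxx.
have hwj : dist e x0 w = j.+1 by lia.
have [h1 _ _] := H y x0; rewrite (dist_sym esym y x0) hy in h1.
have [p] : exists p, p \in [set t | e x0 t & (dist e y t).+1 == j].
  apply/card_gt0P; rewrite h1; apply: cpos; rewrite hj1 /=; lia.
rewrite !inE => /andP[hx0p /eqP hp].
have hpy : dist e p y = j.-1 by rewrite dist_sym //; lia.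
have m1 := dist_lip p hyz.
have m2 : (dist e z x0 <= (dist e z p).+1)%N by apply: dist_lip; rewrite esym.
have m3 := dist_lip p hyw.
have m4 : (dist e w x0 <= (dist e w p).+1)%N by apply: dist_lip; rewrite esym.
rewrite (dist_sym esym z x0) (dist_sym esym z p) in m2.
rewrite (dist_sym esym w x0) (dist_sym esym w p) in m4.
have hpz : dist e p z = j by lia.
have hpw : dist e p w = j by lia.
have [_ h2 _] := H p z; rewrite hpz in h2; rewrite -h2; apply/card_gt0P; exists w.
by rewrite !inE hzw hpw eqxx.
Qed.

Local Open Scope ring_scope.

Lemma lin1 (R : comPzRingType) (u v x y : R) : u = v -> x - y = u - v -> x = y.
Proof. move=> -> h; apply/eqP; by rewrite -subr_eq0 h subrr. Qed.

Lemma linc (R : comPzRingType) (l u v x y : R) : u = v -> x - y = l * (u - v) -> x = y.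
Proof. move=> -> h; apply/eqP; by rewrite -subr_eq0 h subrr mulr0. Qed.

Lemma linc2 (R : comPzRingType) (l1 l2 u1 v1 u2 v2 x y : R) : u1 = v1 -> u2 = v2 ->
  x - y = l1 * (u1 - v1) + l2 * (u2 - v2) -> x = y.
Proof. move=> -> -> h; apply/eqP; by rewrite -subr_eq0 h !subrr !mulr0 addr0. Qed.

Lemma F_gen (R : comPzRingType) (eps sg rh k c b sm u sp rm v rp : R) :
  u*v - sm*rm = eps*(sm*v - u*rm) ->
  sp*rp - u*v = eps*(u*rp - sp*v) ->
  c*(sm - u) + b*(sp - u) = k*(sg-1)*u ->
  c*(rm - v) + b*(rp - v) = k*(rh-1)*v ->
  sg*rh - 1 = eps*(rh - sg) ->
  (1+eps)*v*((eps-sg)*(c*(sm-u)*(sp-eps*u) + b*(sp-u)*(sm-eps*u))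
     - k*(1-sg)*(sm-eps*u)*(sp-eps*u)) = 0.
Proof.
move=> h1 h2 h3 h4 h5.
have d1 : u*v - sm*rm - eps*(sm*v - u*rm) = 0 by rewrite h1 subrr.
have d2 : sp*rp - u*v - eps*(u*rp - sp*v) = 0 by rewrite h2 subrr.
have d4 : c*(rm - v) + b*(rp - v) - k*(rh-1)*v = 0 by rewrite h4 subrr.
have d5 : sg*rh - 1 - eps*(rh - sg) = 0 by rewrite h5 subrr.
have -> : (1+eps)*v*((eps-sg)*(c*(sm-u)*(sp-eps*u) + b*(sp-u)*(sm-eps*u))
     - k*(1-sg)*(sm-eps*u)*(sp-eps*u)) =
   (eps-sg)*(c*(sp-eps*u)*(-(u*v - sm*rm - eps*(sm*v - u*rm)))
             + b*(sm-eps*u)*(sp*rp - u*v - eps*(u*rp - sp*v)))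
   - (eps-sg)*(sm-eps*u)*(sp-eps*u)*(c*(rm - v) + b*(rp - v) - k*(rh-1)*v)
   + (sm-eps*u)*(sp-eps*u)*k*v*(sg*rh - 1 - eps*(rh - sg)) by ring.
by rewrite d1 d2 d4 d5; ring.
Qed.

Section Alg.
Variables (R : realFieldType) (D : nat) (a b c : nat -> nat).
Hypothesis HD : (3 <= D)%N.
Hypothesis Hsum : forall j, (j <= D)%N -> (a j + b j + c j = b 0)%N.
Hypothesis Hc0 : c 0%N = 0%N.
Hypothesis Ha0 : a 0%N = 0%N.
Hypothesis Hc1 : c 1%N = 1%N.
Hypothesis Hcpos : forall j, (1 <= j <= D)%N -> (0 < c j)%N.
Hypothesis Hbpos : forall j, (j < D)%N -> (0 < b j)%N.
Hypothesis Hapos : forall j, (1 <= j < D)%N -> (0 < a j)%N.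

Local Notation k := ((b 0%N)%:R : R).
Local Notation pcf := (pseudo_cosine_for D a b c).

Lemma natA j : (j <= D)%N -> ((a j)%:R : R) = k - (b j)%:R - (c j)%:R.
Proof.
move=> hj; have : ((a j + b j + c j)%N%:R : R) = k by rewrite Hsum.
rewrite !natrD => <-; ring.
Qed.

Lemma recE th (s : nat -> R) : pcf th s ->
  th = k * s 1%N /\ forall j, (j < D)%N ->
   (c j)%:R * (s j.-1 - s j) + (b j)%:R * (s j.+1 - s j) = k * (s 1%N - 1) * s j.
Proof.
case=> s0 rec.
have h0 := rec 0%N ltac:(lia); rewrite Hc0 Ha0 s0 /= in h0.
have hth : th = k * s 1%N by apply: (lin1 (esym h0)); ring.
split => // j hj; have := rec j hj; rewrite natA ?hth; last by lia.
move=> h; apply: (lin1 h); ring.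
Qed.

Lemma nocons th (s : nat -> R) : pcf th s -> forall j, (j < D)%N -> ~ (s j = 0 /\ s j.+1 = 0).
Proof.
case=> s0 rec; elim=> [|j IH] hj [h1 h2].
  by move: h1; rewrite s0 => /eqP; rewrite oner_eq0.
have := rec j.+1 hj; rewrite h1 h2 !mulr0 !addr0 => /eqP; rewrite mulf_eq0 pnatr_eq0.
case/orP => [/eqP hc|/eqP h0]; first by have := Hcpos (j:=j.+1); rewrite hc; lia.
apply: IH; [lia | by split].
Qed.

Lemma Leps th th' (s r : nat -> R) : pcf th s -> pcf th' r -> r 1%N != 1 ->
  (forall j, (1 <= j <= D)%N -> (s j + s j.-1) * (r j - r j.-1) = 0) -> False.
Proof.
move=> Hs Hr hr1 H.
have [_ Es] := recE Hs; have [_ Er] := recE Hr.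
case: Hs => s0 _; case: Hr => r0 _.
have e1 := H 1%N ltac:(lia); rewrite /= s0 r0 in e1.
have hs1 : s 1%N = -1.
  move/eqP: e1; rewrite mulf_eq0 => /orP[|]; first by rewrite addr_eq0 => /eqP.
  by rewrite subr_eq0 (negbTE hr1).
have k1 : k = (a 1%N)%:R + (b 1%N)%:R + 1.
  have := natA (j:=1%N) ltac:(lia); rewrite Hc1 => ->; ring.
have ha1 : 0 < ((a 1%N)%:R : R) by rewrite ltr0n; apply: Hapos; lia.
have hb1 : 0 < ((b 1%N)%:R : R) by rewrite ltr0n; apply: Hbpos; lia.
have hc2 : 0 < ((c 2%N)%:R : R) by rewrite ltr0n; apply: Hcpos; lia.
have ha2 : 0 <= ((a 2%N)%:R : R) by rewrite ler0n.
have E1 := Es 1%N ltac:(lia); rewrite /= Hc1 s0 hs1 k1 in E1.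
have q1 : (b 1%N)%:R * (s 2%N - 1) = 2 * (a 1%N)%:R.
  apply: (lin1 E1); ring.
have s2pos : 0 < s 2%N - 1.
  by rewrite -(pmulr_rgt0 _ hb1) q1 mulr_gt0.
have e2 := H 2%N ltac:(lia); rewrite /= hs1 in e2.
have hr2 : r 2%N = r 1%N.
  move/eqP: e2; rewrite mulf_eq0 => /orP[|/eqP h]; last by apply/eqP; rewrite -subr_eq0 h.
  move=> /eqP h; have : s 2%N - 1 = 0 by rewrite -h; ring.
  by move=> h'; rewrite h' ltxx in s2pos.
have F1 := Er 1%N ltac:(lia); rewrite /= Hc1 r0 hr2 in F1.
have hkr : k * r 1%N = -1.
  have : (1 - r 1%N) * (1 + k * r 1%N) = 0 by apply: (lin1 F1); ring.
  move/eqP; rewrite mulf_eq0 => /orP[|/eqP h]; last by apply: (lin1 h); ring.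
  by rewrite subr_eq0 eq_sym (negbTE hr1).
have F2 := Er 2%N ltac:(lia); rewrite /= hr2 in F2.
have hr3 : r 3%N - r 2%N != 0.
  rewrite hr2; apply/eqP => h.
  have : 1 - r 1%N = 0.
    have <- : (c 2%N)%:R * (r 1%N - r 1%N) + (b 2%N)%:R * (r 3%N - r 1%N) = 1 - r 1%N.
      rewrite F2; apply: (linc (l:=r 1%N - 1) hkr); ring.
    by rewrite h; ring.
  by move/eqP; rewrite subr_eq0 eq_sym (negbTE hr1).
have e3 := H 3%N ltac:(lia); rewrite /= in e3.
have hs3 : s 3%N = - s 2%N.
  move/eqP: e3; rewrite mulf_eq0 (negbTE hr3) orbF addr_eq0 => /eqP //.
have k2 : k = (a 2%N)%:R + (b 2%N)%:R + (c 2%N)%:R.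
  have := natA (j:=2%N) ltac:(lia) => ->; ring.
have E2 := Es 2%N ltac:(lia); rewrite /= hs1 hs3 k2 in E2.
have q2 : (s 2%N - 1) * (2 * (a 2%N)%:R + (c 2%N)%:R) + 2 * (a 2%N)%:R = 0.
  apply: (lin1 E2); ring.
have : 0 < (s 2%N - 1) * (2 * (a 2%N)%:R + (c 2%N)%:R) by apply: mulr_gt0 => //; lra.
lra.
Qed.

Lemma main_alg th th' (s r : nat -> R) eps : pcf th s -> pcf th' r -> s 1%N != 1 -> r 1%N != 1 ->
  aux_param D s r eps ->
  forall i, (1 <= i)%N -> (i < D)%N ->
    [/\ (s i.+1 - s i) * (s i.-1 - s i) != 0,
        (s 1%N ^+ 2 - s 2%N) * (1 - eps * s 1%N) != 0 &
        (a i)%:R = (eps - 1) * (1 - s 2%N) / ((s 1%N ^+ 2 - s 2%N) * (1 - eps * s 1%N))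
                 * ((s i.+1 - s 1%N * s i) * (s i.-1 - s 1%N * s i))
                 / ((s i.+1 - s i) * (s i.-1 - s i))].
Proof.
move=> Hs Hr hs1 hr1 Haux.
have [hth Es] := recE Hs; have [_ Er] := recE Hr.
have s0 : s 0%N = 1 by case: Hs.
have r0 : r 0%N = 1 by case: Hr.
have epsn1 : eps != -1.
  apply/eqP => he; apply: (Leps Hs Hr hr1) => j hj; have := Haux j hj; rewrite he => h.
  apply: (lin1 h); ring.
have eps1 : eps != 1.
  apply/eqP => he; apply: (Leps Hr Hs hs1) => j hj; have := Haux j hj; rewrite he => h.
  apply: (lin1 h); ring.
have A0 := Haux 1%N ltac:(lia); rewrite /= s0 r0 in A0.
have A0' : s 1%N * r 1%N - 1 = eps * (r 1%N - s 1%N) by apply: (lin1 A0); ring.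
have epss : eps - s 1%N != 0.
  apply/eqP => he.
  have : (s 1%N - 1) * (s 1%N + 1) = 0.
    apply: (lin1 A0'); have -> : eps = s 1%N by apply/eqP; rewrite -subr_eq0 he.
    ring.
  move/eqP; rewrite mulf_eq0 subr_eq0 (negbTE hs1) /= addr_eq0 => /eqP h.
  have e' : eps = s 1%N by apply/eqP; rewrite -subr_eq0 he.
  move/eqP: epsn1; apply; by rewrite e' h.
have kpos : k != 0 by rewrite pnatr_eq0 -lt0n; apply: Hbpos; lia.
have F : forall i, (1 <= i)%N -> (i < D)%N ->
   (eps - s 1%N) * ((c i)%:R * (s i.-1 - s i) * (s i.+1 - eps * s i)
      + (b i)%:R * (s i.+1 - s i) * (s i.-1 - eps * s i))
   = k * (1 - s 1%N) * (s i.-1 - eps * s i) * (s i.+1 - eps * s i).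
  move=> i hi1 hiD.
  have h1 := Haux i ltac:(lia).
  have h2 := Haux i.+1 ltac:(lia); rewrite [i.+1.-1]/= in h2.
  have E1 := Es i hiD; have E2 := Er i hiD.
  case: (eqVneq (r i) 0) => hv.
    have rm : r i.-1 != 0.
      apply/eqP => h; apply: (nocons Hr (j:=i.-1)); first lia.
      by rewrite (prednK hi1).
    have rp : r i.+1 != 0.
      apply/eqP => h; by apply: (nocons Hr (j:=i)).
    have hP : s i.-1 - eps * s i = 0.
      rewrite hv in h1.
      have : r i.-1 * (s i.-1 - eps * s i) = 0 by apply: (linc (l:=-1) h1); ring.
      by move/eqP; rewrite mulf_eq0 (negbTE rm) /= => /eqP.
    have hQ : s i.+1 - eps * s i = 0.
      rewrite hv in h2.
      have : r i.+1 * (s i.+1 - eps * s i) = 0 by apply: (lin1 h2); ring.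
      by move/eqP; rewrite mulf_eq0 (negbTE rp) /= => /eqP.
    rewrite hP hQ; ring.
  have := F_gen h1 h2 E1 E2 A0'.
  move/eqP; rewrite !mulf_eq0 (negbTE hv) orbF.
  have -> : (1 + eps == 0) = false.
    apply/negbTE; apply: contra epsn1; rewrite addrC addr_eq0 => /eqP ->; by [].
  by rewrite orFb subr_eq0 => /eqP.
have T : forall i, (1 <= i)%N -> (i < D)%N ->
   (a i)%:R * (eps - s 1%N) * ((s i.-1 - s i) * (s i.+1 - s i)) =
   k * (eps - 1) * ((s i.-1 - s 1%N * s i) * (s i.+1 - s 1%N * s i)).
  move=> i hi1 hiD.
  have f := F i hi1 hiD; have E1 := Es i hiD.
  rewrite natA; last by lia.
  apply: (linc2 (l1:=-1) (l2:= -(eps - s 1%N)*(eps-1)*s i) f E1); ring.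
have K1 : (eps - s 1%N) * (s 2%N - 1) = k * (1 - eps * s 1%N) * (s 2%N - s 1%N ^+ 2).
  have f := F 1%N ltac:(lia) ltac:(lia); have E1 := Es 1%N ltac:(lia).
  rewrite /= Hc1 s0 in f E1.
  have : (1 - s 1%N) * ((eps - s 1%N) * (s 2%N - 1) - k * (1 - eps * s 1%N) * (s 2%N - s 1%N ^+ 2)) = 0.
    apply: (linc2 (l1:=1) (l2:= -(eps - s 1%N)*(1 - eps * s 1%N)) f E1); ring.
  move/eqP; rewrite mulf_eq0 => /orP[|]; first by rewrite subr_eq0 eq_sym (negbTE hs1).
  by rewrite subr_eq0 => /eqP.
have s2n1 : s 2%N - 1 != 0.
  apply/eqP => h2'.
  have h2 : s 2%N = 1 by apply/eqP; rewrite -subr_eq0 h2'.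
  have T2 := T 2%N isT ltac:(lia); rewrite /= h2 in T2.
  have : (a 2%N)%:R * (eps - s 1%N) * ((s 1%N - 1) * (s 3%N - 1)) = 0 by rewrite T2; ring.
  have hs1' : s 1%N - 1 != 0 by rewrite subr_eq0.
  move/eqP; rewrite !mulf_eq0 pnatr_eq0 (negbTE epss) orbF (negbTE hs1') /=.
  have -> : (a 2%N == 0%N) = false by apply/negbTE; rewrite -lt0n; apply: Hapos; lia.
  rewrite /= subr_eq0 => /eqP h3.
  have E2 := Es 2%N ltac:(lia); rewrite /= h2 h3 in E2.
  have : ((c 2%N)%:R - k) * (s 1%N - 1) = 0 by apply: (lin1 E2); ring.
  move/eqP; rewrite mulf_eq0 (negbTE hs1') orbF subr_eq0 => /eqP hc.
  have : ((a 2%N + b 2%N)%N%:R : R) = 0.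
    rewrite natrD; have := natA (j:=2%N) ltac:(lia); rewrite hc => ->; ring.
  move/eqP; rewrite pnatr_eq0 => /eqP h.
  have := Hapos (j:=2%N); lia.
have N4 : forall j, (j < D)%N -> s j.+1 - s j != 0.
  case=> [|j] hj; first by rewrite s0 subr_eq0.
  apply/eqP => h.
  have hT := T j.+1 isT hj; simpl in hT; rewrite h !mulr0 in hT.
  have hsp : s j.+2 = s j.+1 by apply/eqP; rewrite -subr_eq0 h.
  have sj : s j.+1 != 0.
    apply/eqP => h0; apply: (nocons Hs (j:=j.+1)) => //; split => //.
    by rewrite hsp.
  move/eqP: hT; rewrite eq_sym !mulf_eq0 (negbTE kpos) subr_eq0 (negbTE eps1) /=.
  rewrite hsp.
  have -> : s j.+1 - s 1%N * s j.+1 = s j.+1 * (1 - s 1%N) by ring.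
  have hs1'' : 1 - s 1%N != 0 by rewrite subr_eq0 eq_sym.
  rewrite mulf_eq0 (negbTE sj) (negbTE hs1'') !orbF subr_eq0 => /eqP hm.
  have E1 := Es j.+1 hj; rewrite /= hm in E1.
  rewrite hsp in E1.
  have : ((c j.+1)%:R - k) * (s 1%N - 1) * s j.+1 = 0 by apply: (lin1 E1); ring.
  have hs1' : s 1%N - 1 != 0 by rewrite subr_eq0.
  move/eqP; rewrite !mulf_eq0 (negbTE sj) (negbTE hs1') !orbF subr_eq0 => /eqP hc.
  have : ((a j.+1 + b j.+1)%N%:R : R) = 0.
    rewrite natrD; have := natA (j:=j.+1) ltac:(lia); rewrite hc => ->; ring.
  move/eqP; rewrite pnatr_eq0 => /eqP hab.
  have := Hbpos hj; lia.
move=> i hi1 hiD.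
have nzY : (s i.+1 - s i) * (s i.-1 - s i) != 0.
  rewrite mulf_neq0 ?N4 //.
  have := N4 i.-1 ltac:(lia); rewrite (prednK hi1).
  by apply: contra => /eqP h; apply/eqP; rewrite -opprB h oppr0.
have nzD : (s 1%N ^+ 2 - s 2%N) * (1 - eps * s 1%N) != 0.
  apply/eqP => h.
  have : (eps - s 1%N) * (s 2%N - 1) = 0.
    rewrite K1; have -> : k * (1 - eps * s 1%N) * (s 2%N - s 1%N ^+ 2)
       = - k * ((s 1%N ^+ 2 - s 2%N) * (1 - eps * s 1%N)) by ring.
    by rewrite h mulr0.
  by move/eqP; rewrite mulf_eq0 (negbTE epss) (negbTE s2n1).
split => //.
have nzY' : (eps - s 1%N) * ((s i.-1 - s i) * (s i.+1 - s i)) != 0.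
  rewrite mulf_neq0 //; move: nzY; by rewrite mulrC.
have ha : (a i)%:R = k * (eps - 1) * ((s i.-1 - s 1%N * s i) * (s i.+1 - s 1%N * s i))
          / ((eps - s 1%N) * ((s i.-1 - s i) * (s i.+1 - s i))).
  apply: (canRL (mulfK nzY')); rewrite -(T i hi1 hiD); ring.
have hk : k = (eps - s 1%N) * (1 - s 2%N) / ((s 1%N ^+ 2 - s 2%N) * (1 - eps * s 1%N)).
  apply: (canRL (mulfK nzD)); apply: (lin1 K1); ring.
rewrite ha hk; field.
move: nzY nzD; rewrite !mulf_eq0 !negb_or => /andP[-> ->] /andP[-> ->].
by rewrite epss.
Qed.

End Alg.

Theorem lemma13p2 (T : finType) (e : rel T) (D : nat) (a b c : nat -> nat)
  (R : realFieldType) (s : nat -> R) (eps : R) :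
  distance_regular e D a b c -> (3 <= D)%N -> a 1%N <> 0%N ->
  tight_with_aux D a b c s eps ->
  let sg := s 1%N in
  let g := (eps - 1) * (1 - s 2%N) / ((sg ^+ 2 - s 2%N) * (1 - eps * sg)) in
  forall i : nat, (1 <= i <= D.-1)%N ->
    [/\ (s i.+1 - s i) * (s i.-1 - s i) != 0,
        (sg ^+ 2 - s 2%N) * (1 - eps * sg) != 0 &
        (a i)%:R = g * ((s i.+1 - sg * s i) * (s i.-1 - sg * s i))
                     / ((s i.+1 - s i) * (s i.-1 - s i))].

Proof.
move=> HDR HD ha1 [hs1 [[th Hs] [r [[th' Hr] hr1 _ Haux]]]] sg g i /andP[hi1 hi2].
have [F1 [c0 [a0 [c1 [cpos [bpos apos]]]]]] := dr_facts HDR HD ha1.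
have hiD : (i < D)%N by lia.
exact: (main_alg HD F1 c0 a0 c1 cpos bpos apos Hs Hr hs1 hr1 Haux hi1 hiD).
Qed.
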